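(* Let $k$ be a field of characteristic $p>0$, $P$ a finite poset, $R=\mathcal{R}_k[J(P)]$ the Hibi ring and $\mathfrak{m}=R_+$. Then \[ \limsup_{e\to\infty}\frac{\nu(p^e)}{p^e}\ \le\ \operatorname{rank}^*P+2, \] where $\nu(p^e)=\max\{r\in\mathbb{N}\mid\mathfrak{m}^r\not\subseteq\mathfrak{m}^{[p^e]}\}$.
   Context: Let $P=\{p_1,\dots,p_N\}$ be a finite poset and $J(P)$ the set of poset ideals of $P$ (down-closed subsets, including $\emptyset$ and $P$). The Hibi ring is $\mathcal{R}_k[J(P)]=k[\,T\prod_{p_i\in I}X_i\mid I\in J(P)\,]\subseteq k[T,X_1,\dots,X_N]$, each generator in degree $1$; $\mathfrak{m}=R_+$ is generated by these generators; $\mathfrak{m}^{[q]}=(x^q\mid x\in\mathfrak{m})$. $x\lessdot y$ means $x<y$ with no $z$ satisfying $x<z<y$. A path is a sequence $C=(q_1,\dots,q_t)$ of distinct elements of $P$ with $q_1$ minimal in $P$, consecutive elements related by $q_i\lessdot q_{i+1}$ or $q_{i+1}\lessdot q_i$, and $q_{t-1}\lessdot q_t$ (when $t\ge2$); it is maximal if $q_t$ is maximal in $P$. For $1<i<t$, $q_i$ is locally maximal if $q_{i-1}\lessdot q_i$ and $q_{i+1}\lessdot q_i$, locally minimal if $q_i\lessdot q_{i-1}$ and $q_i\lessdot q_{i+1}$; $q_1$ counts as locally minimal and $q_t$ as locally maximal. The decomposition $C=A_1+D_1+\cdots+D_{n-1}+A_n$ splits $C$ into consecutive blocks: $A_1$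 is $q_1$ through the first locally maximal element, $D_1$ the following elements through the next locally minimal element, $A_2$ the following elements through the next locally maximal element, etc., $A_n$ ending at $q_t$; $t(A_i)$ is the last element of $A_i$, $V(\cdot)$ the set of elements of a block, $\langle A\rangle=\{q\in P\mid q\le t(A)\}$, and $\langle A_i\setminus t(A_i)\rangle$ the poset ideal generated by the elements of $A_i$ other than $t(A_i)$. $C$ satisfies ( * ) if for all $1\le i\le n-1$: (1) $V(D_i)\cap(\bigcup_{m=1}^{i-1}\langle A_m\rangle\cup\langle A_i\setminus t(A_i)\rangle\cup\{t(A_i)\})=\emptyset$; (2) $V(A_{i+1})\cap\bigcup_{m=1}^{i}\langle A_m\rangle=\emptyset$. $\operatorname{len}^*C=\#\{i\mid q_i\lessdot q_{i+1}\}$, and $\operatorname{rank}^*P$ is the maximum of $\operatorname{len}^*C$ over maximal paths $C$ satisfying ( * ). *)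

(* Defs.v *)
From HB Require Import structures.
From mathcomp Require Import all_boot all_order all_algebra.
From mathcomp Require Import mpoly.

Set Implicit Arguments.
Unset Strict Implicit.
Unset Printing Implicit Defensive.

Import Order.TTheory GRing.Theory.

(* A path C = (q_1,...,q_t) is a seq P; indices are 0-based internally.      *)
Section Paths.
Variables (d : Order.disp_t) (P : finPOrderType d).
Local Open Scope order_scope.

Definition cov (x y : P) : bool :=
  (x < y) && [forall z, ~~ ((x < z) && (z < y))].
Definition minimalP (x : P) : bool := [forall y, ~~ (y < x)].
Definition maximalP (x : P) : bool := [forall y, ~~ (x < y)].

Variable x0 : P.

Definition qq (c : seq P) (i : nat) : P := nth x0 c i.

Definition is_path (c : seq P) : bool :=
  [&& (0 < size c)%N, uniq c, minimalP (qq c 0),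
      all (fun i => cov (qq c i) (qq c i.+1) || cov (qq c i.+1) (qq c i))
          (iota 0 (size c).-1)
    & (2 <= size c)%N ==> cov (qq c (size c).-2) (qq c (size c).-1)].

Definition is_max_path (c : seq P) : bool :=
  is_path c && maximalP (qq c (size c).-1).

(* locally maximal / locally minimal positions (q_t counts as locally
   maximal, q_1 as locally minimal) *)
Definition loc_max (c : seq P) (i : nat) : bool :=
  (i == (size c).-1) ||
  [&& (0 < i)%N, (i < (size c).-1)%N, cov (qq c i.-1) (qq c i)
    & cov (qq c i.+1) (qq c i)].
Definition loc_min (c : seq P) (i : nat) : bool :=
  (i == 0%N) ||
  [&& (0 < i)%N, (i < (size c).-1)%N, cov (qq c i) (qq c i.-1)
    & cov (qq c i) (qq c i.+1)].

(* positions of the ends t(A_1) < t(A_2) < ... < t(A_n) = q_t of the A-blocks,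
   and of the ends t(D_1) < ... < t(D_{n-1}) of the D-blocks *)
Definition peaks (c : seq P) : seq nat := [seq i <- iota 0 (size c) | loc_max c i].
Definition valleys (c : seq P) : seq nat :=
  [seq i <- iota 0 (size c) | (0 < i)%N && loc_min c i].
Definition nblocks (c : seq P) : nat := size (peaks c).
Definition pk (c : seq P) (j : nat) : nat := nth 0%N (peaks c) j.
Definition vl (c : seq P) (j : nat) : nat := nth 0%N (valleys c) j.

(* index sets of the blocks A_{j+1} and D_{j+1} (0-based block index j) *)
Definition Aidx (c : seq P) (j : nat) : seq nat :=
  [seq i <- iota 0 (size c) |
     ((j == 0%N) || (vl c j.-1 < i)%N) && (i <= pk c j)%N].
Definition Didx (c : seq P) (j : nat) : seq nat :=
  [seq i <- iota 0 (size c) | (pk c j < i)%N && (i <= vl c j)%N].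
Definition tA (c : seq P) (j : nat) : P := qq c (pk c j).

Definition starC (c : seq P) : bool :=
  all (fun j =>
    (* (1) V(D_i) avoids  U_{m<i} <A_m>  U  <A_i \ t(A_i)>  U  {t(A_i)} *)
    all (fun i =>
           ~~ [|| has (fun m => qq c i <= tA c m) (iota 0 j),
                  has (fun i' => (i' != pk c j) && (qq c i <= qq c i')) (Aidx c j)
                | qq c i == tA c j])
        (Didx c j)
    (* (2) V(A_{i+1}) avoids U_{m<=i} <A_m> *)
    && all (fun i => ~~ has (fun m => qq c i <= tA c m) (iota 0 j.+1))
           (Aidx c j.+1))
  (iota 0 (nblocks c).-1).

Definition lenstar (c : seq P) : nat :=
  count (fun i => cov (qq c i) (qq c i.+1)) (iota 0 (size c).-1).

End Paths.

(* rank^* P : maximum of len^* C over maximal paths C satisfying (star).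
   Paths have distinct elements, hence length n.+1 <= #|P|.
   (For the empty poset this maximum over the empty family is 0.) *)
Definition rank_star (d : Order.disp_t) (P : finPOrderType d) : nat :=
  \max_(n < #|P|)
    \max_(t : n.+1.-tuple P | is_max_path (thead t) t && starC (thead t) t)
       lenstar (thead t) t.

(* The Hibi ring R_k[J(P)] inside k[T, X_p : p in P] = {mpoly k[#|P|.+1]},   *)
(* T = 'X_0 and X_p = 'X_(lift 0 (enum_rank p)).                              *)
Section Hibi.
Variables (k : fieldType) (d : Order.disp_t) (P : finPOrderType d).
Local Open Scope ring_scope.

Notation A := {mpoly k[#|P|.+1]}.

Definition poset_ideal (I : {set P}) : bool :=
  [forall x in I, forall y, (y <= x)%O ==> (y \in I)].

Definition Xv (x : P) : A := 'X_(lift ord0 (enum_rank x)).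

Definition hibi_gen (I : {set P}) : A :=
  'X_ord0 * \prod_(x in I) Xv x.

Inductive inHibi : A -> Prop :=
| inHibi_const (c : k) : inHibi c%:MP
| inHibi_gen (I : {set P}) : poset_ideal I -> inHibi (hibi_gen I)
| inHibi_add f g : inHibi f -> inHibi g -> inHibi (f + g)
| inHibi_mul f g : inHibi f -> inHibi g -> inHibi (f * g).

Inductive idealR (S : A -> Prop) : A -> Prop :=
| idealR0 : idealR S 0
| idealR_mul r s : inHibi r -> S s -> idealR S (r * s)
| idealR_add f g : idealR S f -> idealR S g -> idealR S (f + g).

(* m = R_+, generated by the generators *)
Definition hibi_m : A -> Prop :=
  idealR (fun f => exists2 I, poset_ideal I & f = hibi_gen I).

Definition hibi_m_pow (r : nat) : A -> Prop :=
  idealR (fun f => exists s : seq A,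
            [/\ size s = r, {in s, forall x, hibi_m x} & f = \prod_(x <- s) x]).

Definition hibi_m_frob (q : nat) : A -> Prop :=
  idealR (fun f => exists2 x, hibi_m x & f = x ^+ q).

Definition pow_not_in_frob (r q : nat) : Prop :=
  ~ (forall f, hibi_m_pow r f -> hibi_m_frob q f).

End Hibi.

(* Main.v *)
Require Import Defs.
From HB Require Import structures.
From mathcomp Require Import all_boot all_order all_algebra.
From mathcomp Require Import mpoly.
From mathcomp Require Import zify.
From Stdlib Require Import Classical.
Import Order.TTheory GRing.Theory Num.Theory.
Set Implicit Arguments.
Unset Strict Implicit.
Unset Printing Implicit Defensive.

Section Comb.
Variables (d : Order.disp_t) (P : finPOrderType d).
Local Open Scope order_scope.
Implicit Types x y z u v : P.

Lemma covW x y : cov x y -> x < y.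
Proof. by case/andP. Qed.

Lemma cov_asym x y : cov x y -> cov y x -> False.
Proof. by move=> /covW h1 /covW h2; move: (lt_trans h1 h2); rewrite ltxx. Qed.

Lemma interval_ind (Q : P -> P -> Prop) :
  (forall x y, cov x y -> Q x y) ->
  (forall x z y, x < z -> z < y -> Q x z -> Q z y -> Q x y) ->
  forall x y, x < y -> Q x y.
Proof.
move=> Hc Hs.
suff H : forall n x y, (#|[set z | (x < z)%O && (z < y)%O]| < n)%N -> x < y -> Q x y.
  by move=> x y; apply: (H _.+1).
elim=> [//|n IH] x y hn lxy; rewrite ltnS in hn.
case: (boolP [exists z, (x < z) && (z < y)]) => [/existsP [z /andP [xz zy]]|hn0].
  apply: (Hs x z y xz zy); apply: IH => //.
    apply: leq_trans _ hn; apply: proper_card; apply/properP; split.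
      by apply/subsetP => w; rewrite !inE => /andP [-> /= h]; apply: lt_trans h zy.
    by exists z; rewrite !inE ?xz ?zy ?ltxx ?andbF.
  apply: leq_trans _ hn; apply: proper_card; apply/properP; split.
    by apply/subsetP => w; rewrite !inE => /andP [h ->]; rewrite (lt_trans xz h).
  by exists z; rewrite !inE ?xz ?zy ?ltxx ?andbF.
apply: Hc; rewrite /cov lxy /=; apply/forallP => z; apply/negP => h.
by move/negP: hn0; apply; apply/existsP; exists z.
Qed.

Lemma chain_up x y : x <= y ->
  connect (fun u v => [&& cov u v, x <= u & v <= y]) x y.
Proof.
rewrite le_eqVlt => /orP [/eqP -> //|].
pose Q := fun x y => forall x' y', x' <= x -> y <= y' ->
  connect (fun u v => [&& cov u v, x' <= u & v <= y']) x y.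
suff H : forall x y, x < y -> Q x y by move=> h; apply: (H _ _ h).
apply: interval_ind.
  move=> a b hab x' y' h1 h2; apply: connect1; rewrite hab h1 h2 //.
move=> a c b ac cb H1 H2 x' y' h1 h2.
apply: connect_trans (H1 _ _ h1 _) (H2 _ _ _ h2).
  exact: le_trans (ltW cb) h2.
exact: le_trans h1 (ltW ac).
Qed.

Lemma chain_cov x y : x <= y -> connect (@cov d P) x y.
Proof.
move/chain_up; apply: connect_sub => u v /andP [h _]; exact: connect1.
Qed.

Lemma chain_down x y : y <= x -> connect (fun u v => cov v u) x y.
Proof.
move/chain_cov; rewrite (connect_rev (@cov d P)) //.
Qed.

Lemma exists_minimal x : exists2 m, minimalP m & m <= x.
Proof.
suff H : forall n x, (#|[set y | (y < x)%O]| < n)%N -> exists2 m, minimalP m & m <= x.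
  exact: (H _.+1).
elim=> [//|n IH] {}x hn; rewrite ltnS in hn.
case: (boolP (minimalP x)) => [hm|]; first by exists x.
case/forallPn => y; rewrite negbK => yx.
have [m hm my] : exists2 m, minimalP m & m <= y.
  apply: IH; apply: leq_trans _ hn; apply: proper_card; apply/properP; split.
    by apply/subsetP => w; rewrite !inE => h; apply: lt_trans h yx.
  by exists y; rewrite !inE ?yx ?ltxx.
by exists m => //; apply: le_trans my (ltW yx).
Qed.

Lemma exists_maximal x : exists2 m, maximalP m & x <= m.
Proof.
suff H : forall n x, (#|[set y | (x < y)%O]| < n)%N -> exists2 m, maximalP m & x <= m.
  exact: (H _.+1).
elim=> [//|n IH] {}x hn; rewrite ltnS in hn.
case: (boolP (maximalP x)) => [hm|]; first by exists x.
case/forallPn => y; rewrite negbK => yx.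
have [m hm my] : exists2 m, maximalP m & y <= m.
  apply: IH; apply: leq_trans _ hn; apply: proper_card; apply/properP; split.
    by apply/subsetP => w; rewrite !inE => h; apply: lt_trans yx h.
  by exists y; rewrite !inE ?yx ?ltxx.
by exists m => //; apply: le_trans (ltW yx) my.
Qed.

End Comb.

Lemma filter_iota_lt (p : pred nat) n x j : (x <= n)%N ->
  (j < count p (iota 0 x))%N -> (nth 0%N (filter p (iota 0 n)) j < x)%N.
Proof.
move=> xn jc.
have -> : iota 0 n = iota 0 x ++ iota x (n - x) by rewrite -iotaD subnKC.
rewrite filter_cat nth_cat size_filter jc.
have : nth 0%N (filter p (iota 0 x)) j \in filter p (iota 0 x).
  by apply: mem_nth; rewrite size_filter.
by rewrite mem_filter mem_iota add0n => /andP [_ /andP [_ ->]].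
Qed.

Lemma filter_iota_nth (p : pred nat) n j : (j < count p (iota 0 n))%N ->
  let y := nth 0%N (filter p (iota 0 n)) j in
  [/\ (y < n)%N, p y & count p (iota 0 y) = j].
Proof.
move=> jc y.
have yin : y \in filter p (iota 0 n) by apply: mem_nth; rewrite size_filter.
move: (yin); rewrite mem_filter mem_iota add0n => /andP [py /andP [_ yn]].
split => //.
have hu : uniq (filter p (iota 0 n)) by apply: filter_uniq; apply: iota_uniq.
case: (ltngtP j (count p (iota 0 y))) => // h.
  have := filter_iota_lt (ltnW yn) h; rewrite -/y ltnn //.
have e : iota 0 n = iota 0 y ++ iota y (n - y) by rewrite -iotaD subnKC // ltnW.
have e2 : iota y (n - y) = y :: iota y.+1 (n - y).-1.
  by case E: (n - y) => [|m] /=; [move: yn; rewrite -subn_gt0 E | ].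
have hc : (count p (iota 0 y) < size (filter p (iota 0 n)))%N by rewrite size_filter (leq_trans h) // ltnW.
have E : nth 0%N (filter p (iota 0 n)) (count p (iota 0 y)) = nth 0%N (filter p (iota 0 n)) j.
  rewrite -/y {1}e filter_cat nth_cat size_filter ltnn subnn e2 /= py //.
move/eqP: E; rewrite nth_uniq // ?size_filter // => /eqP h2; move: h; rewrite h2 ltnn //.
Qed.

Section Star.
Variables (d : Order.disp_t) (P : finPOrderType d) (x0 : P).
Local Open Scope order_scope.
Variable c : seq P.
Local Notation q := (qq x0 c).
Local Notation sz := (size c).
Local Arguments qq : simpl never.
Hypothesis W1 : forall i, (i.+1 < sz)%N -> cov (q i) (q i.+1) || cov (q i.+1) (q i).
Hypothesis W2 : (1 < sz)%N -> cov (q sz.-2) (q sz.-1).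
Hypothesis W3 : (1 < sz)%N -> cov (q 0) (q 1).
Hypothesis Hu : uniq c.
Hypothesis NS : forall i k j, (i <= k)%N -> (k < j)%N -> (j < sz)%N ->
  cov (q k) (q k.+1) -> ~~ (q j <= q i).
Hypothesis Hsz : (0 < sz)%N.

Definition vy i := (0 < i)%N && loc_min x0 c i.

Lemma alternation x : (x < sz)%N ->
  count (loc_max x0 c) (iota 0 x) = (count vy (iota 0 x) + ((0 < x)%N && cov (q x) (q x.-1)))%N.
Proof.
elim: x => [//|x IH] hx.
rewrite -addn1 !iotaD !count_cat !add0n /= !addn0.
have hx' : (x < sz)%N by apply: ltnW.
rewrite IH // /vy /loc_max /loc_min.
case: x IH hx hx' => [|x] IH hx hx'.
  have h1 := W3 hx.
  have -> : (0 == sz.-1) = false by case: sz hx => [|[|]].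
  rewrite addn1 /=; case h2: (cov (q 1) (q 0)); rewrite ?andbF /=  //.
  by case: (cov_asym h1 h2).
have -> : (x.+1 == sz.-1) = false by apply/negbTE; rewrite neq_ltn -ltnS prednK ?hx // (ltn_trans _ hx).
have -> : (x.+1 < sz.-1)%N by rewrite -ltnS prednK // (ltn_trans _ hx).
rewrite !addn1 /=.
have A := W1 hx'.  have B := W1 hx.
have nA : ~~ (cov (q x) (q x.+1) && cov (q x.+1) (q x)).
  by apply/negP => /andP [h1 h2]; case: (cov_asym h1 h2).
have nB : ~~ (cov (q x.+1) (q x.+2) && cov (q x.+2) (q x.+1)).
  by apply/negP => /andP [h1 h2]; case: (cov_asym h1 h2).
move: A B nA nB.
case: (cov (q x) (q x.+1)); case: (cov (q x.+1) (q x));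
case: (cov (q x.+1) (q x.+2)); case: (cov (q x.+2) (q x.+1)) => //= *; lia.
Qed.

Definition nb := nblocks x0 c.

Lemma iota_last : iota 0 sz = rcons (iota 0 sz.-1) sz.-1.
Proof. by rewrite -cats1 -{1}(prednK Hsz) -addn1 iotaD. Qed.

Lemma nb_valleys : nb = (size (valleys x0 c)).+1.
Proof.
rewrite /nb /nblocks /peaks /valleys !size_filter iota_last -!cats1 !count_cat /=.
rewrite alternation ?ltn_predL //.
have -> : loc_max x0 c sz.-1 by rewrite /loc_max eqxx.
have -> : ((0 < sz.-1)%N && loc_min x0 c sz.-1) = false by rewrite /loc_min ltnn !andbF orbF; case: (sz.-1).
have -> : (0 < sz.-1)%N && cov (q sz.-1) (q sz.-1.-1) = false.
  case h: (0 < sz.-1)%N => //=; apply/negbTE/negP => h2.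
  have h1 : (1 < sz)%N by rewrite -(prednK Hsz) ltnS.
  exact: cov_asym (W2 h1) h2.
by rewrite /vy !addn0 addn1.
Qed.

Lemma count_lm_last : count (loc_max x0 c) (iota 0 sz.-1) = nb.-1.
Proof.
rewrite /nb /nblocks /peaks size_filter.
rewrite iota_last -cats1 count_cat /= ?addn0.
have -> : loc_max x0 c sz.-1 by rewrite /loc_max eqxx.
by rewrite addn1.
Qed.

Lemma pk_props j : (j < nb.-1)%N ->
  [/\ (0 < pk x0 c j)%N, (pk x0 c j < sz.-1)%N, cov (q (pk x0 c j).-1) (q (pk x0 c j)),
      count (loc_max x0 c) (iota 0 (pk x0 c j)) = j & (pk x0 c j < sz)%N].
Proof.
move=> hj.
have hj' : (j < count (loc_max x0 c) (iota 0 sz))%N.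
  by move: hj; rewrite /nb /nblocks /peaks size_filter; case: (count _ _) => //= n h; apply: ltn_trans h _.
have [h1 h2 h3] := filter_iota_nth hj'.
have lt : (pk x0 c j < sz.-1)%N.
  apply: filter_iota_lt; first exact: leq_pred.
  by rewrite count_lm_last.
move: h2; rewrite /loc_max -/(pk x0 c j).
rewrite (ltn_eqF lt) /= => /and4P [a b e f].
by split.
Qed.

Lemma vl_props j : (j < nb.-1)%N ->
  [/\ (pk x0 c j < vl x0 c j)%N, (vl x0 c j < sz.-1)%N & cov (q (vl x0 c j)) (q (vl x0 c j).+1)].
Proof.
move=> hj.
have hj' : (j < count vy (iota 0 sz))%N.
  by move: hj; rewrite nb_valleys /valleys size_filter.
have [h1 h2 h3] := filter_iota_nth hj'.
move: h2 h3; rewrite /vl /valleys.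
set z := nth 0%N _ j => /andP [z0]; rewrite /loc_min (negbTE (lt0n_neq0 z0)) /= => /and4P [_ zs zd zu] hc.
split => //.
apply: filter_iota_lt; first exact: ltnW.
rewrite alternation // hc z0 /= zd addn1 //.
Qed.

Lemma pk_lt m j : (m < j)%N -> (j < nb.-1)%N -> (pk x0 c m < pk x0 c j)%N.
Proof.
move=> mj hj; have [_ _ _ hc hs] := pk_props hj.
apply: filter_iota_lt; first exact: ltnW.
by rewrite hc.
Qed.

Lemma starC_of : starC x0 c.
Proof.
apply/allP => j; rewrite mem_iota add0n => /andP [_ hj].
rewrite -/nb in hj.
have [p0 ps pc pcount psz] := pk_props hj.
have [pv vs vc] := vl_props hj.
have NSp : forall i0 i', (i0 < pk x0 c j)%N -> (pk x0 c j <= i')%N -> (i' < sz)%N -> ~~ (q i' <= q i0).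
  move=> i0 i' h1 h2 h3; apply: (NS (k := (pk x0 c j).-1)) h3 _.
  - by rewrite -ltnS (prednK p0).
  - by rewrite -ltnS (prednK p0) ltnS.
  - by rewrite (prednK p0).
apply/andP; split.
  apply/allP => i; rewrite /Didx mem_filter mem_iota add0n => /andP [/andP [pi iv] /andP [_ isz]].
  apply/negP => /or3P [].
  - case/hasP => m; rewrite mem_iota add0n => /andP [_ mj] hle.
    have hm := pk_lt mj hj.
    have := NSp _ _ hm (ltnW pi) isz.
    by rewrite /tA in hle; rewrite hle.
  - case/hasP => i'; rewrite /Aidx mem_filter mem_iota add0n => /andP [/andP [_ i'p] _] /andP [ne hle].
    have i'p' : (i' < pk x0 c j)%N by rewrite ltn_neqAle ne.
    have := NSp _ _ i'p' (ltnW pi) isz.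
    by rewrite hle.
  - rewrite /tA => /eqP e.
    have := nth_uniq x0 isz psz Hu.
    by rewrite /qq in e; rewrite e eqxx (gtn_eqF pi).
apply/allP => i; rewrite /Aidx mem_filter mem_iota add0n => /andP [/andP [hv _] /andP [_ isz]].
have vi : (vl x0 c j < i)%N by case/orP: hv.
apply/negP; case/hasP => m; rewrite mem_iota add0n => /andP [_ mj] hle.
have hm : (pk x0 c m <= pk x0 c j)%N.
  move: mj; rewrite ltnS leq_eqVlt => /orP [/eqP -> // | h]; exact: ltnW (pk_lt h hj).
have := NS (i:=pk x0 c m) (k := vl x0 c j) (j := i).
rewrite (leq_trans hm (ltnW pv)) vi isz => /(_ isT isT isT vc).
by rewrite /tA in hle; rewrite hle.
Qed.

End Star.

Section Walks.
Variables (d : Order.disp_t) (P : finPOrderType d).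
Local Open Scope order_scope.
Implicit Types x y z u v m : P.
Local Arguments qq : simpl never.

Fixpoint ups x (p : seq P) : nat :=
  if p is y :: p' then (cov x y + ups y p')%N else 0%N.

Lemma ups_cat x p1 p2 : ups x (p1 ++ p2) = (ups x p1 + ups (last x p1) p2)%N.
Proof. by elim: p1 x => [|y p1 IH] x //=; rewrite IH addnA. Qed.

Lemma ups_rcons x p z : ups x (rcons p z) = (ups x p + cov (last x p) z)%N.
Proof. by rewrite -cats1 ups_cat /= addn0. Qed.

Lemma ups_down x p : path (fun u v => cov v u) x p -> ups x p = 0%N.
Proof.
elim: p x => [|y p IH] x //= /andP [h1 h2]; rewrite IH //.
case h: (cov x y) => //; case: (cov_asym h h1).
Qed.

Lemma last_take m p n : (n <= size p)%N -> last m (take n p) = nth m (m :: p) n.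
Proof.
move=> hn; rewrite (last_nth m) size_takel //.
case: n hn => [|n] hn //=; rewrite nth_take //.
Qed.

Lemma ups_take_mono m p n1 n2 : (n1 <= n2)%N -> (ups m (take n1 p) <= ups m (take n2 p))%N.
Proof. by move=> h; rewrite -(subnKC h) takeD ups_cat leq_addr. Qed.

Lemma ups_takeS m p k : (k < size p)%N ->
  ups m (take k.+1 p) = (ups m (take k p) + cov (nth m (m :: p) k) (nth m (m :: p) k.+1))%N.
Proof. by move=> hk; rewrite (take_nth m hk) ups_rcons last_take // ltnW. Qed.

Lemma lenstar_ups x0 x s : lenstar x0 (x :: s) = ups x s.
Proof.
elim: s x => [|y s IH] x; first by rewrite /lenstar.
rewrite /lenstar /= -IH /lenstar /=.
congr addn; rewrite (iotaDl 1 0) count_map; apply: eq_count => i //.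
Qed.

Lemma uniq_of_NS x0 (c : seq P) :
  (forall i, (i.+1 < size c)%N -> cov (qq x0 c i) (qq x0 c i.+1) || cov (qq x0 c i.+1) (qq x0 c i)) ->
  (forall i k j, (i <= k)%N -> (k < j)%N -> (j < size c)%N ->
     cov (qq x0 c k) (qq x0 c k.+1) -> ~~ (qq x0 c j <= qq x0 c i)) ->
  uniq c.
Proof.
move=> W1 NS.
have key : forall i n, (i + n.+1 < size c)%N ->
   (forall k, (i <= k)%N -> (k < i + n.+1)%N -> ~~ cov (qq x0 c k) (qq x0 c k.+1)) ->
   qq x0 c (i + n.+1) < qq x0 c i.
  move=> i; elim=> [|n IH] hs hk.
    rewrite addn1 in hs *; have := W1 i hs.
    by rewrite (negbTE (hk i (leqnn _) _)) ?addn1 //= => /covW.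
  have h1 : qq x0 c (i + n.+1) < qq x0 c i.
    apply: IH; first by clear -hs; lia.
    by move=> k h h'; apply: hk => //; clear -h'; lia.
  apply: lt_trans _ h1.
  have := W1 (i + n.+1); rewrite -addnS => /(_ hs).
  have hk' := hk (i + n.+1) ltac:(clear; lia) ltac:(clear; lia); rewrite -addnS in hk'.
  by rewrite (negbTE hk') /= => /covW.
apply/(uniqP x0) => i j; rewrite !inE => hi hj e.
wlog ij : i j hi hj e / (i <= j)%N.
  move=> H; case: (leqP i j) => h; first exact: H.
  by symmetry; apply: H => //; rewrite ltnW.
move: ij; rewrite leq_eqVlt => /orP [/eqP //|ij].
exfalso.
case: (boolP (has (fun k => cov (qq x0 c k) (qq x0 c k.+1)) (iota i (j - i)))).
  case/hasP => k; rewrite mem_iota (subnKC (ltnW ij)) => /andP [ik kj] hc.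
  by have := NS i k j ik kj hj hc; rewrite /qq e lexx.
move/hasPn => hn.
have ej : j = (i + (j - i).-1.+1)%N by rewrite prednK ?subn_gt0 // subnKC // ltnW.
move: hj e hn; rewrite ej; set n := (j - i).-1 => hj e hn.
have hk : forall k, (i <= k)%N -> (k < i + n.+1)%N -> ~~ cov (qq x0 c k) (qq x0 c k.+1).
  move=> k h1 h2; apply: hn; rewrite mem_iota h1 /=; clear -h2; lia.
have := key i n hj hk.
by rewrite /qq -e ltxx.
Qed.

End Walks.

Section Good.
Variables (d : Order.disp_t) (P : finPOrderType d).
Local Open Scope order_scope.
Implicit Types x y z u v m : P.
Local Arguments qq : simpl never.
Variables (a : P -> nat) (r qf : nat).
Hypothesis a_rev : forall x y, x <= y -> (a y <= a x)%N.
Hypothesis a_le : forall x, (a x <= r)%N.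
Hypothesis hq : (2 <= qf)%N.
Hypothesis hr : (2 * qf <= r)%N.

Definition vst u v := (cov u v && (a u < a v + qf)%N) || cov v u.
Definition seedm m := minimalP m && (r < a m + qf)%N.
Definition lastup m (p : seq P) := exists p' z, p = rcons p' z /\ cov (last m p') z.
Definition good m p := [/\ seedm m, path vst m p, (a (last m p) < qf)%N & lastup m p].

Lemma abound x p : path vst x p -> (a x <= a (last x p) + (qf - 1) * ups x p)%N.
Proof.
elim: p x => [|y p IH] x /=; first by rewrite muln0 addn0.
case/andP => hv hp; have := IH _ hp.
case/orP: hv => [/andP [hc ha]|hc].
  rewrite hc /= => h; move: ha h; clear; nia.
have hxy := covW hc; have := a_rev (ltW hxy).
case h: (cov x y); first by case: (cov_asym h hc).
rewrite add0n => h1 h2; exact: leq_trans h1 h2.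
Qed.

Lemma normalize m p : seedm m -> path vst m p -> (a (last m p) < qf)%N ->
  exists p', good m p' /\ (ups m p' <= ups m p)%N.
Proof.
move=> hs; elim/last_ind: p => [|p z IH].
  move=> _ /= ha; case/andP: hs => _ hr'; move: hr' ha hr hq; clear; lia.
rewrite rcons_path last_rcons => /andP [hp hv] ha.
have hv' := hv.
case/orP: hv => [/andP [hc _]|hc].
  exists (rcons p z); split => //.
  split => //; first by rewrite rcons_path hp hv'.
    by rewrite last_rcons.
  by exists p, z.
have hl := a_rev (ltW (covW hc)).
have [p' [hg hu]] := IH hp (leq_ltn_trans hl ha).
exists p'; split => //; rewrite ups_rcons; exact: leq_trans hu (leq_addr _ _).
Qed.

Definition NSpos x0 (c : seq P) := forall i k j, (i <= k)%N -> (k < j)%N -> (j < size c)%N ->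
  cov (qq x0 c k) (qq x0 c k.+1) -> ~~ (qq x0 c j <= qq x0 c i).

Lemma shortcut m p i k j : good m p -> (i <= k)%N -> (k < j)%N -> (j < size (m :: p))%N ->
  cov (qq m (m :: p) k) (qq m (m :: p) k.+1) -> qq m (m :: p) j <= qq m (m :: p) i ->
  exists p', good m p' /\ (ups m p' < ups m p)%N.
Proof.
move=> [hs hp ha hl] ik kj jsz hc hle.
have js : (j <= size p)%N by [].
have ij : (i <= j)%N by apply: leq_trans ik (ltnW kj).
have isz : (i <= size p)%N by apply: leq_trans ij js.
set p1 := take i p; set p2 := take (j - i) (drop i p); set p3 := drop j p.
have ep : p = p1 ++ p2 ++ p3 by rewrite catA /p1 /p2 -takeD subnKC // cat_take_drop.
have eu : last m p1 = qq m (m :: p) i by rewrite /p1 last_take.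
have ev : last (last m p1) p2 = qq m (m :: p) j.
  by rewrite -last_cat /p1 /p2 -takeD subnKC // last_take.
have hup : (0 < ups (last m p1) p2)%N.
  have e1 : ups m (take j p) = (ups m p1 + ups (last m p1) p2)%N.
    by rewrite -ups_cat /p1 /p2 -takeD subnKC.
  have h1 := ups_take_mono m p kj.
  have h2 := ups_take_mono m p ik.
  have ks : (k < size p)%N by apply: leq_trans kj js.
  rewrite ups_takeS // in h1.
  rewrite /qq in hc; rewrite hc in h1.
  move: e1 h1 h2; rewrite -/p1; clear; lia.
have [dd hd el] : exists2 dd, path (fun u v => cov v u) (qq m (m :: p) i) dd &
    qq m (m :: p) j = last (qq m (m :: p) i) dd.
  by apply/connectP; apply: chain_down.
have hp' := hp; rewrite ep !cat_path in hp'; case/and3P: hp' => hp1 _ hp3.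
have [p'' [hg hu]] : exists p'', good m p'' /\ (ups m p'' <= ups m (p1 ++ dd ++ p3))%N.
  apply: normalize => //.
    rewrite !cat_path hp1 eu (sub_path _ hd) /=; last first.
      by move=> u v h; rewrite /vst h orbT.
    by rewrite -el -ev.
  by move: ha; rewrite ep !last_cat ev eu -el.
exists p''; split => //; apply: leq_ltn_trans hu _.
rewrite [in X in (_ < X)%N]ep !ups_cat eu (ups_down hd) -el -ev.
rewrite -eu; move: hup; clear; lia.
Qed.

Lemma minimal_walk m p : good m p -> exists p', good m p' /\ NSpos m (m :: p').
Proof.
move: {2}(ups m p).+1 (ltnSn (ups m p)) => n; elim: n p => [//|n IH] p hn hg.
case: (classic (exists p', good m p' /\ (ups m p' < ups m p)%N)) => [[p' [hg' hu]]|hno].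
  apply: (IH p') => //; apply: leq_trans hu _; by rewrite -ltnS.
exists p; split => // i k j ik kj js hc; apply/negP => hle.
by apply: hno; apply: (shortcut hg ik kj js hc hle).
Qed.

Lemma qq_rcons x0 s w : qq x0 (rcons s w) (size s) = w.
Proof. by rewrite /qq nth_rcons ltnn eqxx. Qed.

Lemma qq_rcons_prev x0 s w : (0 < size s)%N -> qq x0 (rcons s w) (size s).-1 = last x0 s.
Proof.
move=> h; rewrite /qq nth_rcons prednK // leqnn -nth_last //.
Qed.

Lemma no_bad m p : ((rank_star P + 2) * qf <= r)%N -> good m p -> NSpos m (m :: p) -> False.
Proof.
move=> hR hg hNS; have [hs hp ha [p' [z' [ep hcz]]]] := hg.
set R := rank_star P in hR.
have hab := abound hp.
have hU : (R < ups m p)%N.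
  case/andP: hs => _ hs'.
  move: hab hs' ha hR hq; clear; nia.
set zl := last m p.
have [M hM hzM] := exists_maximal zl.
have [ext hext eM] := connectP (chain_cov hzM).
set c := (m :: p) ++ ext.
have n0pos : (0 < size p)%N by rewrite ep size_rcons.
have hlast : cov (qq m (m :: p) (size p).-1) (qq m (m :: p) (size p)).
  rewrite ep size_rcons.
  change (cov (qq m (rcons (m :: p') z') (size (m :: p')).-1) (qq m (rcons (m :: p') z') (size (m :: p')))).
  by rewrite qq_rcons qq_rcons_prev.
have hszc : size c = (size p + size ext).+1 by rewrite /c size_cat.
have e1 : forall t, (t <= size p)%N -> qq m c t = qq m (m :: p) t.
  by move=> t ht; rewrite /c /qq nth_cat /= ltnS ht.
have e2 : forall t, (size p <= t)%N -> qq m c t = nth m (zl :: ext) (t - size p).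
  move=> t ht; rewrite /c (lastI m p) cat_rcons /qq nth_cat size_belast.
  by rewrite ltnNge ht.
have hsorted : sorted <%O (zl :: ext).
  by rewrite /=; apply: sub_path hext => u v /covW.
have chain_lt : forall a1 b1, (a1 < b1)%N -> (b1 < (size ext).+1)%N ->
    nth m (zl :: ext) a1 < nth m (zl :: ext) b1.
  move=> a1 b1 ab bs; apply: (sorted_ltn_nth lt_trans) => //.
  by rewrite inE /= (ltn_trans ab bs).
have W1 : forall i, (i.+1 < size c)%N -> cov (qq m c i) (qq m c i.+1) || cov (qq m c i.+1) (qq m c i).
  have hst : path (fun u v => cov u v || cov v u) m (p ++ ext).
    rewrite cat_path; apply/andP; split.
      by apply: sub_path hp => u v; rewrite /vst => /orP [/andP [-> _]|->] //; rewrite orbT.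
    by apply: sub_path hext => u v ->.
  move=> i hi; move/(pathP m): hst => /(_ i); apply.
  by rewrite size_cat -ltnS -hszc.
have NSc : forall i k j, (i <= k)%N -> (k < j)%N -> (j < size c)%N ->
    cov (qq m c k) (qq m c k.+1) -> ~~ (qq m c j <= qq m c i).
  move=> i k j ik kj js hc; apply/negP => hle.
  have jsz' := js; case: (leqP j (size p)) => jp.
    have kp : (k.+1 <= size p)%N by apply: leq_trans kj jp.
    have ip : (i <= size p)%N by apply: leq_trans ik (ltnW kp).
    rewrite (e1 k (ltnW kp)) (e1 k.+1 kp) in hc; rewrite (e1 j jp) (e1 i ip) in hle.
    by move/negP: (hNS i k j ik kj (jp : (j < (size p).+1)%N) hc).
  case: (leqP (size p) i) => ip.
    rewrite !e2 ?(ltnW jp) // in hle.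
    have := chain_lt (i - size p) (j - size p).
    rewrite ltn_sub2r //; last by apply: leq_ltn_trans ik kj.
    have hj' : (j - size p < (size ext).+1)%N by move: js; rewrite hszc; clear -jp; lia.
    move=> /(_ isT hj').
    by move=> h; move: hle; rewrite (lt_geF h).
  have hz : qq m c (size p) <= qq m c j.
    rewrite !e2 ?(ltnW jp) // subnn; apply: ltW; apply: chain_lt; first by rewrite subn_gt0.
    by move: js; rewrite hszc; clear -jp; lia.
  have := hNS i (size p).-1 (size p) ltac:(by rewrite -ltnS prednK) ltac:(by rewrite ltn_predL) (ltnSn _).
  rewrite prednK // => /(_ hlast).
  by rewrite -!e1 ?(ltnW ip) // (le_trans hz hle).
have Hu : uniq c by apply: (uniq_of_NS W1 NSc).
have hmin : minimalP m by case/andP: hs.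
have W3 : (1 < size c)%N -> cov (qq m c 0) (qq m c 1).
  move=> h; have := W1 0 h; case/orP => // h2.
  by move/forallP: hmin => /(_ (qq m c 1)); rewrite (covW h2).
have hlastc : forall e, path (@cov d P) zl e ->
    cov (qq m ((m :: p) ++ e) (size ((m :: p) ++ e)).-2) (qq m ((m :: p) ++ e) (size ((m :: p) ++ e)).-1).
  move=> e; case/lastP: e => [|e' w] he.
    by rewrite cats0; move: hlast; rewrite -[(size (m :: p)).-2]/((size p).-1).
  rewrite -rcons_cat size_rcons; set s := (m :: p) ++ e'.
  change (cov (qq m (rcons s w) (size s).-1) (qq m (rcons s w) (size s))).
  rewrite qq_rcons qq_rcons_prev; last by rewrite /s size_cat.
  rewrite /s last_cat.
  by move: he; rewrite rcons_path => /andP [_].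
have W2 : (1 < size c)%N -> cov (qq m c (size c).-2) (qq m c (size c).-1).
  by move=> _; apply: hlastc.
have Hsz : (0 < size c)%N by rewrite hszc.
have hstar : starC m c := starC_of W1 W2 W3 Hu NSc Hsz.
have hmax : is_max_path m c.
  apply/andP; split; last first.
    rewrite /qq nth_last /c last_cat -/zl -eM //.
  apply/and5P; split => //.
  - by apply/allP => i; rewrite mem_iota add0n => /andP [_ hi]; apply: W1; rewrite -ltn_predRL.
  - by apply/implyP.
have hlen : (R < lenstar m c)%N.
  by rewrite /c /= lenstar_ups ups_cat (leq_trans hU) // leq_addr.
have hcard : (size c <= #|P|)%N by rewrite -(card_uniqP Hu) max_card.
have hn : ((size c).-1 < #|P|)%N by rewrite prednK.
have htup : size c == ((size c).-1).+1 by rewrite prednK.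
pose t := Tuple htup.
have : (lenstar (thead t) t <= R)%N.
  rewrite /R /rank_star.
  apply: leq_trans (leq_bigmax (Ordinal hn)).
  by apply: (leq_bigmax_cond (P := fun t : ((size c).-1).+1.-tuple P => is_max_path (thead t) t && starC (thead t) t) (F := fun t : ((size c).-1).+1.-tuple P => lenstar (thead t) t) t); rewrite /= hmax hstar.
by rewrite leqNgt hlen.
Qed.

Lemma ideal_exists : ((rank_star P + 2) * qf <= r)%N -> exists I : {set P},
  [/\ forall x y, y \in I -> x <= y -> x \in I,
      forall x, x \in I -> (qf <= a x)%N,
      forall x, x \notin I -> (a x + qf <= r)%N &
      forall x y, x \in I -> y \notin I -> x <= y -> (a y + qf <= a x)%N].
Proof.
move=> hR.
exists [set y | [exists m, seedm m && connect vst m y]].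
have hcl : forall x y, vst x y -> x \in [set y | [exists m, seedm m && connect vst m y]] ->
    y \in [set y | [exists m, seedm m && connect vst m y]].
  move=> x y hv; rewrite !inE => /existsP [m /andP [hm hc]].
  apply/existsP; exists m; rewrite hm /=; apply: connect_trans hc (connect1 hv).
split.
- move=> x y; rewrite !inE => /existsP [m /andP [hm hc]] hxy.
  apply/existsP; exists m; rewrite hm /=; apply: connect_trans hc _.
  apply: connect_sub (chain_down hxy) => u v h; apply: connect1; by rewrite /vst h orbT.
- move=> x; rewrite inE => /existsP [m /andP [hm /connectP [p hp ex]]].
  rewrite leqNgt; apply/negP => hx.
  have [p' [hg _]] := normalize hm hp ltac:(by rewrite -ex).
  have [p'' [hg' hns]] := minimal_walk hg.
  exact: no_bad hR hg' hns.
- move=> x hx; rewrite leqNgt; apply/negP => hlt; move/negP: hx; apply.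
  have [mm hmin hmx] := exists_minimal x.
  have hax := a_rev hmx.
  rewrite inE; apply/existsP; exists mm; apply/andP; split.
    by rewrite /seedm hmin /=; apply: leq_trans hlt _; rewrite leq_add2r.
  apply: connect_sub (chain_up hmx) => u v /and3P [hc hu hv]; apply: connect1.
  rewrite /vst hc /=; apply/orP; left.
  have := a_rev hu; have := a_rev hv; have := a_le mm.
  move: hlt; clear; lia.
move=> x y hx hy; rewrite le_eqVlt => /orP [/eqP exy|]; first by move: hx hy; rewrite exy => ->.
move: x y hx hy.
have H : forall x y, x < y -> x \in [set y | [exists m, seedm m && connect vst m y]] ->
   y \notin [set y | [exists m, seedm m && connect vst m y]] -> (a y + qf <= a x)%N.
  apply: interval_ind.
    move=> x y hc hx hy; rewrite leqNgt; apply/negP => h; move/negP: hy; apply.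
    by apply: hcl hx; rewrite /vst hc h.
  move=> x z y xz zy H1 H2 hx hy.
  case: (boolP (z \in [set y | [exists m, seedm m && connect vst m y]])) => hz.
    exact: leq_trans (H2 hz hy) (a_rev (ltW xz)).
  have := H1 hx hz; have := a_rev (ltW zy); clear; lia.
by move=> x y hx hy hxy; apply: H.
Qed.

End Good.

Section Alg.
Variables (k : fieldType) (d : Order.disp_t) (P : finPOrderType d).
Local Notation A := {mpoly k[#|P|.+1]}.
Local Open Scope ring_scope.

Lemma inHibi1 : inHibi (1 : A).
Proof. by rewrite -mpolyC1; apply: inHibi_const. Qed.

Lemma inHibi_prod (Js : seq {set P}) : all (@poset_ideal d P) Js ->
  inHibi (\prod_(J <- Js) hibi_gen k J).
Proof.
elim: Js => [|J Js IH] /=; first by rewrite big_nil => _; exact: inHibi1.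
by case/andP => hJ hJs; rewrite big_cons; apply: inHibi_mul; [apply: inHibi_gen | apply: IH].
Qed.

Lemma idealR_mulL (S : A -> Prop) r f : inHibi r -> idealR S f -> idealR S (r * f).
Proof.
move=> hr; elim=> [|r' s hr' hs|f1 f2 _ IH1 _ IH2].
- by rewrite mulr0; apply: idealR0.
- by rewrite mulrA; apply: idealR_mul => //; apply: inHibi_mul.
- by rewrite mulrDr; apply: idealR_add.
Qed.

Lemma idealR_sub (S S' : A -> Prop) f : (forall s, S s -> idealR S' s) -> idealR S f -> idealR S' f.
Proof.
move=> hS; elim=> [|r s hr hs|f1 f2 _ IH1 _ IH2].
- exact: idealR0.
- by apply: idealR_mulL => //; apply: hS.
- by apply: idealR_add.
Qed.

Lemma idealR_of (S : A -> Prop) s : S s -> idealR S s.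
Proof. by move=> h; rewrite -[s]mul1r; apply: idealR_mul => //; exact: inHibi1. Qed.

Definition prodS (S1 S2 : A -> Prop) := fun h => exists a b, [/\ S1 a, S2 b & h = a * b].

Lemma idealR_prod (S1 S2 : A -> Prop) f g :
  idealR S1 f -> idealR S2 g -> idealR (prodS S1 S2) (f * g).
Proof.
have L : forall s g, S1 s -> idealR S2 g -> idealR (prodS S1 S2) (s * g).
  move=> s g0 hs; elim=> [|r' s' hr' hs'|f1 f2 _ IH1 _ IH2].
  - by rewrite mulr0; apply: idealR0.
  - rewrite mulrCA; apply: idealR_mul => //; by exists s, s'.
  - by rewrite mulrDr; apply: idealR_add.
move=> hf hg; elim: hf => [|r s hr hs|f1 f2 _ IH1 _ IH2].
- by rewrite mul0r; apply: idealR0.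
- by rewrite -mulrA; apply: idealR_mulL => //; apply: L.
- by rewrite mulrDl; apply: idealR_add.
Qed.

Definition Gs (n : nat) : A -> Prop := fun h => exists Js : seq {set P},
  [/\ size Js = n, all (@poset_ideal d P) Js & h = \prod_(J <- Js) hibi_gen k J].

Lemma prod_m (s : seq A) : {in s, forall x, hibi_m x} -> idealR (Gs (size s)) (\prod_(x <- s) x).
Proof.
elim: s => [|x s IH] hs.
  by rewrite big_nil; apply: idealR_of; exists [::]; rewrite big_nil.
rewrite big_cons.
have hx : hibi_m x by apply: hs; rewrite mem_head.
have hs' : idealR (Gs (size s)) (\prod_(y <- s) y).
  by apply: IH => y hy; apply: hs; rewrite inE hy orbT.
have := idealR_prod hx hs'.
apply: idealR_sub => h [a [b [[I hI ->] [Js [hsz hJs ->] ->]]]].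
apply: idealR_of; exists (I :: Js); split => //=; first by rewrite hsz.
  by rewrite hI.
by rewrite big_cons.
Qed.

End Alg.

Section Mono.
Variables (k : fieldType) (d : Order.disp_t) (P : finPOrderType d).
Local Notation A := {mpoly k[#|P|.+1]}.
Local Notation n := #|P|.+1.
Local Open Scope ring_scope.

Definition gm (I : {set P}) : 'X_{1..n} :=
  (U_(ord0) + \sum_(x in I) U_(lift ord0 (enum_rank x)))%MM.

Lemma hibi_genE I : hibi_gen k I = 'X_[gm I] :> A.
Proof.
rewrite /hibi_gen /gm mpolyXD; congr (_ * _)%R.
by rewrite (big_morph (fun m => 'X_[m] : A) (@mpolyXD _ _) (@mpolyX0 _ _)).
Qed.

Lemma gm0 I : gm I ord0 = 1%N.
Proof.
rewrite /gm mnmDE mnm1E eqxx mnm_sumE big1 // => x _.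
by rewrite mnm1E eq_sym (negbTE (neq_lift _ _)).
Qed.

Lemma gmS I (j : 'I_#|P|) : gm I (lift ord0 j) = (enum_val j \in I).
Proof.
rewrite /gm mnmDE mnm1E (negbTE (neq_lift _ _)) add0n mnm_sumE.
have e : forall x, (lift ord0 (enum_rank x) == lift ord0 j) = (x == enum_val j).
  by move=> x; rewrite (inj_eq (@lift_inj _ ord0)) -(inj_eq enum_val_inj) enum_rankK.
under eq_bigr => x _ do rewrite mnm1E e.
case: (boolP (enum_val j \in I)) => hj.
  rewrite (bigD1 (enum_val j)) //= eqxx big1 // => x /andP [_ h]; by rewrite (negbTE h).
by rewrite big1 // => x hx; case: eqP hx => // ->; rewrite (negbTE hj).
Qed.

Lemma prod_genE (Js : seq {set P}) :
  \prod_(J <- Js) hibi_gen k J = 'X_[(\sum_(J <- Js) gm J)%MM] :> A.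
Proof.
under eq_bigr => J _ do rewrite hibi_genE.
by rewrite (big_morph (fun m => 'X_[m] : A) (@mpolyXD _ _) (@mpolyX0 _ _)).
Qed.

Lemma sum_gm0 (Js : seq {set P}) : (\sum_(J <- Js) gm J)%MM ord0 = size Js :> nat.
Proof.
rewrite mnm_sumE; under eq_bigr => J _ do rewrite gm0. by rewrite sum1_size.
Qed.

Lemma sum_gmS (Js : seq {set P}) (j : 'I_#|P|) :
  (\sum_(J <- Js) gm J)%MM (lift ord0 j) = count (fun J : {set P} => enum_val j \in J) Js :> nat.
Proof.
rewrite mnm_sumE; under eq_bigr => J _ do rewrite gmS.
elim: Js => [|J Js IH]; first by rewrite big_nil.
by rewrite big_cons IH.
Qed.

End Mono.

Lemma count_lt_iota m n : count (fun j => (j < m)%N) (iota 0 n) = minn m n.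
Proof.
elim: n => [|n IH]; first by rewrite minn0.
rewrite -addn1 iotaD count_cat IH /= add0n; lia.
Qed.

Section Glue.
Variables (k : fieldType) (d : Order.disp_t) (P : finPOrderType d).
Local Notation A := {mpoly k[#|P|.+1]}.
Local Open Scope ring_scope.

Lemma gens_in_frob (qf r : nat) (Js : seq {set P}) :
  (2 <= qf)%N -> ((rank_star P + 2) * qf <= r)%N ->
  size Js = r -> all (@poset_ideal d P) Js ->
  @hibi_m_frob k d P qf (\prod_(J <- Js) hibi_gen k J).
Proof.
move=> hq hR hsz hJs.
pose a := fun x : P => count (fun J : {set P} => x \in J) Js.
have a_rev : forall x y : P, (x <= y)%O -> (a y <= a x)%N.
  move=> x y hxy; move: hJs; rewrite /a; clear a hsz; elim: Js => [|J Js' IH] //= /andP [hJ hJs'].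
  apply: leq_add; last exact: IH.
  case: (boolP (y \in J)) => // hy /=.
  by move/forallP: hJ => /(_ y); rewrite hy /= => /forallP /(_ x); rewrite hxy /= => ->.
have a_le : forall x, (a x <= r)%N by move=> x; rewrite -hsz count_size.
have hr2 : (2 * qf <= r)%N by move: hR; clear; nia.
have [I [hI1 hI2 hI3 hI4]] := ideal_exists a_rev a_le hq hr2 hR.
pose b := fun x : P => (a x - qf * (x \in I))%N.
pose Ks := [seq [set x | (j < b x)%N] | j <- iota 0 (r - qf)].
have hKs : all (@poset_ideal d P) Ks.
  apply/allP => K /mapP [j _ ->].
  apply/forallP => x; apply/implyP; rewrite inE => hx; apply/forallP => y; apply/implyP => hyx.
  rewrite inE; apply: leq_trans hx _; rewrite /b.
  have := a_rev _ _ hyx.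
  case: (boolP (x \in I)) => hxI.
    by rewrite (hI1 _ _ hxI hyx) /=; clear; lia.
  case: (boolP (y \in I)) => hyI /=.
    have := hI4 _ _ hyI hxI hyx; clear; lia.
  clear; lia.
have hI : poset_ideal I.
  apply/forallP => x; apply/implyP => hx; apply/forallP => y; apply/implyP => hyx.
  exact: hI1 hx hyx.
have -> : \prod_(J <- Js) hibi_gen k J = \prod_(J <- Ks) hibi_gen k J * (hibi_gen k I) ^+ qf.
  rewrite !prod_genE hibi_genE mpolyXn -mpolyXD; congr mpolyX.
  apply/mnmP => i; rewrite mnmDE mulmnE.
  case: (unliftP ord0 i) => [j ->|->].
    rewrite !sum_gmS gmS count_map.
    set y := enum_val j.
    have -> : count (fun j0 => enum_val j \in [set x | (j0 < b x)%N]) (iota 0 (r - qf)) =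
              count (fun j0 => (j0 < b y)%N) (iota 0 (r - qf)).
      by apply: eq_count => j0; rewrite inE.
    rewrite count_lt_iota /b -/(a y).
    have := a_le y.
    case: (boolP (y \in I)) => hy.
      have := hI2 _ hy; clear; lia.
    have := hI3 _ hy; clear; lia.
  rewrite !sum_gm0 gm0 size_map size_iota hsz; clear -hR hq; nia.
apply: idealR_mul; first exact: inHibi_prod.
exists (hibi_gen k I) => //.
by apply: idealR_of; exists I.
Qed.

End Glue.


Unset Implicit Arguments.
Set Strict Implicit.
Set Printing Implicit Defensive.
Local Open Scope ring_scope.

Theorem corollary2p9 (k : fieldType) (p : nat) (hp : p \in [pchar k])
    (d : Order.disp_t) (P : finPOrderType d) :
  forall eps : rat, 0 < eps ->
  exists E : nat, forall e : nat, (E <= e)%N ->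
    forall r : nat, pow_not_in_frob k P r (p ^ e)%N ->
      r%:Q / (p ^ e)%N%:Q <= (rank_star P + 2)%:Q + eps.
Proof.
move=> eps heps; exists 1%N => e he r hnot.
have pp : prime p := pcharf_prime hp.
have hq : (2 <= p ^ e)%N.
  rewrite -(subnKC he) expnS; apply: leq_trans (prime_gt1 pp) _.
  by rewrite leq_pmulr // expn_gt0 prime_gt0.
have hlt : (r < (rank_star P + 2) * p ^ e)%N.
  rewrite ltnNge; apply/negP => hR; apply: hnot => f.
  apply: idealR_sub => g [s [hs hin ->]].
  have := prod_m hin; rewrite hs.
  apply: idealR_sub => h [Js [hsz hJs ->]].
  exact: gens_in_frob hq hR hsz hJs.
have hq0 : 0 < (p ^ e)%N%:Q by rewrite ltr0n expn_gt0 prime_gt0.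
rewrite ler_pdivrMr //.
apply: le_trans (_ : ((rank_star P + 2) * p ^ e)%N%:Q <= _).
  by rewrite ler_nat ltnW.
rewrite PoszM intrM; apply: ler_wpM2r; first by rewrite ler0z.
by rewrite lerDl ltW.
Qed.
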